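(* (1) For any $\mu,\lambda\in(0,1)$: $\mathbb{L}^{>0}(\mathrm{QBA}|\mathrm{ND})\subseteq\mathbb{L}^{>\mu}(\mathrm{QBA}|\mathrm{ND})=\mathbb{L}^{>\lambda}(\mathrm{QBA}|\mathrm{ND})$. (2) For any $\mu,\lambda\in(0,1)$: $\mathbb{L}^{=1}(\mathrm{QBA}|\mathrm{ND})\subseteq\mathbb{L}^{\ge\mu}(\mathrm{QBA}|\mathrm{ND})=\mathbb{L}^{\ge\lambda}(\mathrm{QBA}|\mathrm{ND})$. (3) For any $\lambda\in[0,1)$: $\mathbb{L}^{=1}(\mathrm{QBA}|\mathrm{ND})\not\subseteq\mathbb{L}^{>\lambda}(\mathrm{QBA}|\mathrm{ND})$.
   Context: A quantum automaton is a tuple $\mathcal{A}=(\mathcal{H},|s_0\rangle,\Sigma,\{U_\sigma:\sigma\in\Sigma\},F)$ where $\mathcal{H}$ is a finite-dimensional complex Hilbert space, $|s_0\rangle$ a unit vector, $\Sigma$ a finite alphabet, each $U_\sigma$ unitary, and $F$ a subspace. For $w\in\Sigma^\omega$ with length-$n$ prefixes $w_n$, the non-disturbing run is $|s_n\rangle=U_{w_n}|s_0\rangle$ where $U_{\sigma_1\cdots\sigma_m}=U_{\sigma_m}\cdots U_{\sigma_1}$, and $f^{\mathrm{ND}}_{\mathcal{A}}(w)=\sup_{|\psi\rangle\in F,\||\psi\rangle\|=1}\sup_{\{n_i\}}\inf_{i\ge1}|\langle\psi|s_{n_i}\rangle|^2$ over strictly increasing sequences $0\le n_1<n_2<\cdots$.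 Languages: $\mathcal{L}^{>0}(\mathcal{A}|\mathrm{ND})=\{w: f^{\mathrm{ND}}_{\mathcal{A}}(w)>0\}$, $\mathcal{L}^{=1}(\mathcal{A}|\mathrm{ND})=\{w:f^{\mathrm{ND}}_{\mathcal{A}}(w)=1\}$, $\mathcal{L}^{>\lambda}(\mathcal{A}|\mathrm{ND})=\{w:f^{\mathrm{ND}}_{\mathcal{A}}(w)>\lambda\}$, $\mathcal{L}^{\ge\lambda}(\mathcal{A}|\mathrm{ND})=\{w:f^{\mathrm{ND}}_{\mathcal{A}}(w)\ge\lambda\}$ (subsets of $\Sigma^\omega$). For each such semantics $\bowtie$, $\mathbb{L}^{\bowtie}(\mathrm{QBA}|\mathrm{ND})$ is the class of all languages $\mathcal{L}^{\bowtie}(\mathcal{A}|\mathrm{ND})$ as $\mathcal{A}$ ranges over all quantum automata. *)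

(* Defs.v *)
From HB Require Import structures.
From mathcomp Require Import all_boot all_order all_algebra.
From mathcomp Require Import classical_sets reals.
From mathcomp Require Import complex.
From mathcomp Require Import Rstruct.
Set Implicit Arguments. Unset Strict Implicit. Unset Printing Implicit Defensive.
Import Order.TTheory GRing.Theory Num.Theory.
Local Open Scope ring_scope.
Local Open Scope classical_set_scope.

Definition RR : realType := Rdefinitions.R.
Definition CC := (RR : rcfType)[i].

Definition adj {m n} (A : 'M[CC]_(m, n)) : 'M[CC]_(n, m) :=
  (map_mx (fun x : CC => conjc x) A)^T.

Definition inner {d} (psi s : 'cV[CC]_d) : CC := (adj psi *m s) 0 0.

Definition abs2 (x : CC) : RR := (Normc.normc x) ^+ 2.

Definition unitary {d} (U : 'M[CC]_d) : Prop := U *m adj U = 1%:M.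

(* A quantum automaton over the alphabet Sigma: Hilbert space C^dim,
   initial unit vector s0, unitaries U, accepting subspace F given as the
   row space of the matrix Fsp (vectors psi with psi^T in the row space). *)
Record QA (Sigma : finType) := {
  dim : nat;
  s0 : 'cV[CC]_dim;
  U : Sigma -> 'M[CC]_dim;
  Fsp : 'M[CC]_dim;
  s0_unit : inner s0 s0 = 1;
  U_unitary : forall a, unitary (U a)
}.

Definition in_F Sigma (A : QA Sigma) (psi : 'cV[CC]_(dim A)) : bool :=
  (psi^T <= Fsp A)%MS.

(* non-disturbing run: s_0 = s0, s_{n+1} = U_{w n} s_n
   (w n is the (n+1)-th letter sigma_{n+1}) *)
Fixpoint run Sigma (A : QA Sigma) (w : nat -> Sigma) (n : nat) : 'cV[CC]_(dim A) :=
  match n with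
  | 0 => s0 A
  | k.+1 => U A (w k) *m run A w k
  end.

Definition strictly_increasing (ns : nat -> nat) : Prop :=
  forall i, (ns i < ns i.+1)%N.

Definition fND Sigma (A : QA Sigma) (w : nat -> Sigma) : RR :=
  sup [set r : RR | exists psi : 'cV[CC]_(dim A),
        [/\ in_F psi, inner psi psi = 1 &
            r = sup [set t : RR | exists ns : nat -> nat,
                      strictly_increasing ns /\
                      t = inf [set u : RR | exists i : nat,
                                 u = abs2 (inner psi (run A w (ns i)))]]]].

Definition lang_gt0 Sigma (A : QA Sigma) : set (nat -> Sigma) := [set w | 0 < fND A w].
Definition lang_eq1 Sigma (A : QA Sigma) : set (nat -> Sigma) := [set w | fND A w = 1].
Definition lang_gt Sigma (lam : RR) (A : QA Sigma) : set (nat -> Sigma) :=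
  [set w | lam < fND A w].
Definition lang_ge Sigma (lam : RR) (A : QA Sigma) : set (nat -> Sigma) :=
  [set w | lam <= fND A w].

Definition QBA_class Sigma (L : QA Sigma -> set (nat -> Sigma)) : set (set (nat -> Sigma)) :=
  [set X | exists A : QA Sigma, X = L A].

(* Main.v *)
Require Import Defs.
From HB Require Import structures.
From mathcomp Require Import all_boot all_order all_algebra.
From mathcomp Require Import boolp classical_sets reals complex Rstruct.
From mathcomp Require Import ring lra zify.
Set Implicit Arguments. Unset Strict Implicit. Unset Printing Implicit Defensive.
Import Order.TTheory GRing.Theory Num.Theory.
Local Open Scope ring_scope.
Local Open Scope classical_set_scope.
Local Open Scope complex_scope.

Definition RE (x : CC) : RR := complex.Re x.
Definition IM (x : CC) : RR := complex.Im x.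
Lemma abs2E (x : CC) : abs2 x = RE x ^+ 2 + IM x ^+ 2.
Proof. case: x => a b; rewrite /abs2 /RE /IM /=. rewrite sqr_sqrtr //. by rewrite addr_ge0 // sqr_ge0. Qed.

Lemma abs2_ge0 x : 0 <= abs2 x.
Proof. by rewrite abs2E addr_ge0 // sqr_ge0. Qed.

Lemma adjE m n (A : 'M[CC]_(m, n)) : adj A = (map_mx conjc A)^T.
Proof. by []. Qed.

Lemma adj_mul m n p (A : 'M[CC]_(m, n)) (B : 'M[CC]_(n, p)) : adj (A *m B) = adj B *m adj A.
Proof. by rewrite !adjE map_mxM trmx_mul. Qed.

Lemma adjK m n (A : 'M[CC]_(m, n)) : adj (adj A) = A.
Proof. by apply/matrixP => i j; rewrite !adjE !mxE conjcK. Qed.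

Lemma adj1 n : adj (1%:M : 'M[CC]_n) = 1%:M.
Proof. by rewrite adjE map_mx1 trmx1. Qed.

Lemma innerE d (psi s : 'cV[CC]_d) : inner psi s = \sum_i conjc (psi i 0) * s i 0.
Proof. by rewrite /inner !mxE; apply: eq_bigr => i _; rewrite !mxE. Qed.

Lemma unitary_l d (U : 'M[CC]_d) : unitary U -> adj U *m U = 1%:M.
Proof. by move/mulmx1C. Qed.

Lemma inner_unitary d (U : 'M[CC]_d) x y : unitary U -> inner (U *m x) (U *m y) = inner x y.
Proof. by move=> hU; rewrite /inner adj_mul -mulmxA (mulmxA (adj U)) unitary_l // mul1mx. Qed.

Lemma run_unit Sigma (A : QA Sigma) w n : inner (run A w n) (run A w n) = 1.
Proof. elim: n => [|n IH] /=; first exact: s0_unit. rewrite inner_unitary ?IH //; exact: U_unitary. Qed.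

Lemma conjcM_RE (x : CC) : conjc x * x = (abs2 x)%:C.
Proof. case: x => a b. rewrite abs2E /RE /IM /=. apply/eqP; rewrite eq_complex /=. apply/andP; split; apply/eqP; ring. Qed.

Notation nc := (@Normc.normc RR).
Lemma nc_ge0 x : 0 <= nc x. Proof. by case: x => a b; rewrite /Normc.normc sqrtr_ge0. Qed.
Lemma nc2 x : nc x ^+ 2 = abs2 x. Proof. by []. Qed.
Lemma ncD x y : nc (x + y) <= nc x + nc y. Proof. exact: le_normcD. Qed.
Lemma ncM x y : nc (x * y) = nc x * nc y. Proof. exact: Normc.normcM. Qed.
Lemma ncJ x : nc (conjc x) = nc x. Proof. by case: x => a b; rewrite /Normc.normc /= sqrrN. Qed.
Lemma abs2M x y : abs2 (x * y) = abs2 x * abs2 y. Proof. by rewrite /abs2 ncM exprMn. Qed.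
Lemma abs2J x : abs2 (conjc x) = abs2 x. Proof. by rewrite /abs2 ncJ. Qed.
Lemma abs2R (r : RR) : abs2 (r%:C) = r ^+ 2. Proof. by rewrite abs2E /RE /IM /= expr0n addr0. Qed.

Lemma nc_sum n (f : 'I_n -> CC) : nc (\sum_i f i) <= \sum_i nc (f i).
Proof.
elim/big_rec2: _ => [|i x y _ IH]; first by rewrite Normc.normc0.
by apply: le_trans (ncD _ _) _; rewrite lerD2l.
Qed.

Definition norm2 d (a : 'cV[CC]_d) : RR := \sum_i abs2 (a i 0).

Lemma norm2_ge0 d (a : 'cV[CC]_d) : 0 <= norm2 a.
Proof. by apply: sumr_ge0 => i _; exact: abs2_ge0. Qed.

Lemma inner_self d (a : 'cV[CC]_d) : inner a a = (norm2 a)%:C.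
Proof. rewrite innerE /norm2 rmorph_sum /=; apply: eq_bigr => i _; exact: conjcM_RE. Qed.

Lemma unit_norm2 d (a : 'cV[CC]_d) : inner a a = 1 -> norm2 a = 1.
Proof. by rewrite inner_self => -[]. Qed.

Lemma amgm (e x y : RR) : 0 < e -> x * y <= (e * x ^+ 2 + y ^+ 2 / e) / 2.
Proof.
move=> e0.
have h : 0 <= (e * x - y) ^+ 2 / e by rewrite divr_ge0 // ?sqr_ge0 // ltW.
have -> : (e * x ^+ 2 + y ^+ 2 / e) / 2 = x * y + ((e * x - y) ^+ 2 / e) / 2.
  by field; rewrite gt_eqF.
by rewrite lerDl divr_ge0.
Qed.

Lemma nc_inner_le d (a b : 'cV[CC]_d) e : 0 < e ->
  nc (inner a b) <= (e * norm2 a + norm2 b / e) / 2.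
Proof.
move=> e0; rewrite innerE; apply: le_trans (nc_sum _) _.
rewrite /norm2 mulr_sumr mulr_suml -big_split /= mulr_suml.
apply: ler_sum => i _; rewrite ncM ncJ -!nc2; exact: amgm.
Qed.

Lemma abs2_inner_le1 d (a b : 'cV[CC]_d) : inner a a = 1 -> inner b b = 1 ->
  abs2 (inner a b) <= 1.
Proof.
move=> /unit_norm2 ha /unit_norm2 hb.
have := nc_inner_le a b ltr01; rewrite ha hb mul1r invr1 mulr1.
have -> : (1 + 1) / 2 = 1 :> RR by field.
move=> h; rewrite -nc2; have := nc_ge0 (inner a b); nra.
Qed.

Lemma SI_id : strictly_increasing id. Proof. by []. Qed.

Section FND.
Variables (Sigma : finType) (A : QA Sigma) (w : nat -> Sigma).

Definition Sset (psi : 'cV[CC]_(Defs.dim A)) (ns : nat -> nat) : set RR :=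
  [set u : RR | exists i : nat, u = abs2 (inner psi (run A w (ns i)))].
Definition Gset (psi : 'cV[CC]_(Defs.dim A)) : set RR :=
  [set t : RR | exists ns : nat -> nat, strictly_increasing ns /\ t = inf (Sset psi ns)].
Definition Tset : set RR :=
  [set r : RR | exists psi : 'cV[CC]_(Defs.dim A),
        [/\ in_F psi, inner psi psi = 1 & r = sup (Gset psi)]].

Lemma fNDE : fND A w = sup Tset. Proof. by []. Qed.

Lemma Sset_ne psi ns : Sset psi ns !=set0. Proof. by exists (abs2 (inner psi (run A w (ns 0)))); exists 0%N. Qed.
Lemma Sset_lb psi ns : has_lbound (Sset psi ns).
Proof. by exists 0 => u [i ->]; exact: abs2_ge0. Qed.

Lemma inf_S_ge (c : RR) psi ns : (forall i, c <= abs2 (inner psi (run A w (ns i)))) -> c <= inf (Sset psi ns).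
Proof. by move=> h; apply: lb_le_inf; [exact: Sset_ne | move=> u [i ->]]. Qed.

Lemma inf_S_le psi ns i : inf (Sset psi ns) <= abs2 (inner psi (run A w (ns i))).
Proof. by apply: ge_inf; [exact: Sset_lb | exists i]. Qed.

Lemma inf_S_ge0 psi ns : 0 <= inf (Sset psi ns).
Proof. by apply: inf_S_ge => i; exact: abs2_ge0. Qed.

Lemma inf_S_le1 psi ns : inner psi psi = 1 -> inf (Sset psi ns) <= 1.
Proof. move=> h; apply: le_trans (inf_S_le psi ns 0) _; exact: abs2_inner_le1 h (run_unit A w (ns 0)). Qed.

Lemma Gset_ne psi : Gset psi !=set0. Proof. exists (inf (Sset psi id)); rewrite /Gset /=; exists id; split => //; exact: SI_id. Qed.

Lemma Gset_sup psi : inner psi psi = 1 -> has_sup (Gset psi).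
Proof. by move=> h; split; [exact: Gset_ne | exists 1 => t [ns [_ ->]]; exact: inf_S_le1]. Qed.

Lemma sup_G_le1 psi : inner psi psi = 1 -> sup (Gset psi) <= 1.
Proof. by move=> h; apply: ge_sup; [exact: Gset_ne | move=> t [ns [_ ->]]; exact: inf_S_le1]. Qed.

Lemma sup_G_ge psi ns (c : RR) : inner psi psi = 1 -> strictly_increasing ns ->
  (forall i, c <= abs2 (inner psi (run A w (ns i)))) -> c <= sup (Gset psi).
Proof.
move=> h hns hc; apply: le_trans (inf_S_ge hc) _.
by apply: sup_upper_bound; [exact: Gset_sup | exists ns].
Qed.

Lemma sup_G_ge0 psi : inner psi psi = 1 -> 0 <= sup (Gset psi).
Proof. move=> h; apply: (sup_G_ge (ns := id)) => // i; exact: abs2_ge0. Qed.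

Lemma Tset_ub : ubound Tset 1.
Proof. by move=> r [psi [_ h ->]]; exact: sup_G_le1. Qed.

Lemma fND_le1 : fND A w <= 1.
Proof.
rewrite fNDE; have [->|ne] := eqVneq Tset set0; first by rewrite sup0 ler01.
by apply: ge_sup; [exact/set0P | exact: Tset_ub].
Qed.

Lemma fND_ge0 : 0 <= fND A w.
Proof.
rewrite fNDE; have [->|/set0P [r Tr]] := eqVneq Tset set0; first by rewrite sup0.
have := Tr => -[psi [_ h hr]]; apply: le_trans (sup_G_ge0 h) _; rewrite -hr.
by apply: sup_upper_bound => //; split; [exists r | exists 1; exact: Tset_ub].
Qed.

Lemma fND_LB psi ns (c : RR) : in_F psi -> inner psi psi = 1 -> strictly_increasing ns ->
  (forall i, c <= abs2 (inner psi (run A w (ns i)))) -> c <= fND A w.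
Proof.
move=> hF h hns hc; apply: le_trans (sup_G_ge h hns hc) _; rewrite fNDE.
by apply: sup_upper_bound; [split; [exists (sup (Gset psi)); exists psi | exists 1; exact: Tset_ub] | exists psi].
Qed.

Lemma fND_EX (lam : RR) : 0 <= lam -> lam < fND A w ->
  exists psi ns (t : RR), [/\ in_F psi, inner psi psi = 1, strictly_increasing ns, lam < t &
    forall i, t <= abs2 (inner psi (run A w (ns i)))].
Proof.
move=> l0; rewrite fNDE; have [->|ne] := eqVneq Tset set0; first by rewrite sup0 ltNge l0.
have ne' : Tset !=set0 by apply/set0P.
move=> /(sup_gt ne') [r [psi [hF h ->]]] /(sup_gt (Gset_ne psi)) [t [ns [hns ->]]] lt.
by exists psi, ns, (inf (Sset psi ns)); split => // i; exact: inf_S_le.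
Qed.

End FND.

Lemma inner_col m n (u u' : 'cV[CC]_m) (v v' : 'cV[CC]_n) :
  inner (col_mx u v) (col_mx u' v') = inner u u' + inner v v'.
Proof. by rewrite /inner !adjE map_col_mx tr_col_mx mul_row_col mxE. Qed.

Lemma innerZl d k (u v : 'cV[CC]_d) : inner (k *: u) v = conjc k * inner u v.
Proof. rewrite !innerE mulr_sumr; apply: eq_bigr => i _; by rewrite mxE rmorphM mulrA. Qed.

Lemma innerZr d k (u v : 'cV[CC]_d) : inner u (k *: v) = k * inner u v.
Proof. rewrite !innerE mulr_sumr; apply: eq_bigr => i _; by rewrite mxE mulrCA. Qed.

Lemma inner11 (x y : 'cV[CC]_1) : inner x y = conjc (x 0 0) * y 0 0.
Proof. by rewrite innerE big_ord1. Qed.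

Lemma adj_block n (M : 'M[CC]_n) :
  adj (block_mx M 0 0 (1%:M : 'M_1)) = block_mx (adj M) 0 0 1%:M.
Proof. by rewrite !adjE map_block_mx tr_block_mx !map_mx0 map_mx1 !trmx0 trmx1. Qed.

Lemma block_unitary n (M : 'M[CC]_n) : unitary M -> unitary (block_mx M 0 0 (1%:M : 'M_1)).
Proof.
rewrite /unitary adj_block mulmx_block => ->.
by rewrite !mulmx0 !mul0mx !addr0 add0r mul1mx -scalar_mx_block.
Qed.

Section Ext.
Variables (Sigma : finType) (A : QA Sigma) (a b : RR) (fb : bool).
Hypothesis hab : a ^+ 2 + b ^+ 2 = 1.

Definition ext_s0 : 'cV[CC]_(Defs.dim A + 1) := col_mx (a%:C *: s0 A) ((b%:C)%:M).
Definition ext_U (x : Sigma) : 'M[CC]_(Defs.dim A + 1) := block_mx (U A x) 0 0 1%:M.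
Definition ext_F : 'M[CC]_(Defs.dim A + 1) := block_mx (Fsp A) 0 0 ((fb%:R : CC)%:M).

Lemma ext_s0_unit : inner ext_s0 ext_s0 = 1.
Proof.
rewrite /ext_s0 inner_col innerZl innerZr s0_unit mulr1 inner11 !mxE /= ?mulr1n.
apply/eqP; rewrite eq_complex /=; apply/andP; split; apply/eqP; [rewrite -hab|]; ring.
Qed.

Lemma ext_U_unitary x : unitary (ext_U x).
Proof. apply: block_unitary; exact: U_unitary. Qed.

Definition ext : QA Sigma := @Build_QA Sigma (Defs.dim A + 1) ext_s0 ext_U ext_F ext_s0_unit ext_U_unitary.

Lemma run_ext w n : run ext w n = col_mx (a%:C *: run A w n) ((b%:C)%:M).
Proof.
elim: n => [|n IH] //=; rewrite IH /= /ext_U mul_block_col.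
by rewrite !mul0mx addr0 add0r mul1mx scalemxAr.
Qed.

Lemma in_F_ext (u : 'cV[CC]_(Defs.dim A)) (v : 'cV[CC]_1) :
  in_F (A := ext) (col_mx u v) <-> in_F u /\ (fb || (v == 0)).
Proof.
rewrite /in_F /= /ext_F tr_col_mx; split.
  move=> /submxP [D]; rewrite -(hsubmxK D) mul_row_block !mulmx0 addr0 add0r.
  move=> /eq_row_mx [-> hv]; split; first exact: submxMl.
  case: fb hv => //= hv; rewrite mul_mx_scalar scale0r in hv.
  by apply/eqP/matrixP => i j; rewrite -[v]trmxK hv !mxE.
move=> [/submxP [D hD] hfb]; apply/submxP; exists (row_mx D v^T).
rewrite mul_row_block !mulmx0 addr0 add0r -hD; congr row_mx.
case: fb hfb => /= [_|/eqP ->]; first by rewrite mulmx1.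
by rewrite trmx0 mul0mx.
Qed.

Lemma inner_ext_run (u : 'cV[CC]_(Defs.dim A)) (v : 'cV[CC]_1) w n :
  inner (col_mx u v) (run ext w n) = a%:C * inner u (run A w n) + conjc (v 0 0) * b%:C.
Proof. by rewrite run_ext inner_col innerZr inner11 mxE /= ?mulr1n. Qed.

Lemma inner_col_self (u : 'cV[CC]_(Defs.dim A)) (v : 'cV[CC]_1) :
  inner (col_mx u v) (col_mx u v) = (norm2 u + abs2 (v 0 0))%:C.
Proof. by rewrite inner_col inner_self inner11 conjcM_RE rmorphD. Qed.

End Ext.
Lemma inf_pigeon (T : finType) (f : nat -> T) :
  exists c, forall N, exists i, (N <= i)%N /\ f i = c.
Proof.
have [//|H] := pselect (exists c, forall N, exists i, (N <= i)%N /\ f i = c).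
exfalso.
have H' : forall c, exists N, forall i, (N <= i)%N -> f i <> c.
  move=> c; have [//|H2] := pselect (exists N, forall i, (N <= i)%N -> f i <> c).
  exfalso; apply: H; exists c => N.
  have [//|H3] := pselect (exists i, (N <= i)%N /\ f i = c).
  exfalso; apply: H2; exists N => i hi fi; apply: H3; by exists i.
have [g hg] := choice H'.
pose M := (\max_(c : T) g c)%N.
by apply: (hg (f M) M) => //; exact: (leq_bigmax (f M)).
Qed.

Definition SIn (ns : nat -> nat) := forall i, (ns i < ns i.+1)%N.

Lemma io_SI (Q : nat -> Prop) : (forall N, exists i, (N <= i)%N /\ Q i) ->
  exists ns, SIn ns /\ forall j, Q (ns j).
Proof.
move=> H; have [h hh] := @choice nat nat (fun N i => (N <= i)%N /\ Q i) H.
pose ns := fix ns j := match j with 0 => h 0%N | j'.+1 => h (ns j').+1 end.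
exists ns; split => [i|j]; first by have [] := hh (ns i).+1.
by case: j => [|j]; [exact: (hh 0%N).2 | exact: (hh _).2].
Qed.

Lemma SI_mono ns : SIn ns -> {homo ns : i j / (i < j)%N}.
Proof. move=> h; apply: homo_ltn => //; exact: ltn_trans. Qed.

Lemma SI_comp ns m : SIn ns -> SIn m -> SIn (ns \o m).
Proof. move=> hn hm i /=; exact: (SI_mono hn (hm i)). Qed.

Lemma SI_ge ns : SIn ns -> forall i, (i <= ns i)%N.
Proof. by move=> h; elim => // i IH; apply: leq_ltn_trans IH (h i). Qed.

Section Cell.
Variable (R : realType) (del : R).
Hypothesis del0 : 0 < del.
Definition Mc := Num.truncn (2 / del).
Definition cellr (r : R) : 'I_Mc.+1 := inord (Num.truncn ((r + 1) / del)).

Lemma cellr_close r s : -1 <= r <= 1 -> -1 <= s <= 1 -> cellr r = cellr s -> `|r - s| < del.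
Proof.
have key : forall x, -1 <= x <= 1 -> (Num.truncn ((x + 1) / del) <= Mc)%N.
  move=> x /andP [h1 h2]; rewrite /Mc truncn_le_nat.
  apply: le_lt_trans (truncnS_gt _); rewrite ler_pM2r ?invr_gt0 //; lra.
have pos : forall x, -1 <= x <= 1 -> 0 <= (x + 1) / del.
  move=> x /andP [h1 h2]; apply: divr_ge0; [lra | exact: ltW].
move=> hr hs; rewrite /cellr => /(congr1 (@nat_of_ord _)); rewrite !inordK ?ltnS ?key // => e.
have /andP [a1 a2] := truncn_itv (pos _ hr).
have /andP [b1 b2] := truncn_itv (pos _ hs).
rewrite e in a1 a2.
have h : `|(r + 1) / del - (s + 1) / del| < 1.
  rewrite ltr_norml; apply/andP; split.
    by move: b2 a1; rewrite -natr1; lra.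
  by move: a2 b1; rewrite -natr1; lra.
have -> : r - s = ((r + 1) / del - (s + 1) / del) * del by field; rewrite gt_eqF.
by rewrite normrM (gtr0_norm del0) -ltr_pdivlMr // mulfV ?gt_eqF.
Qed.
End Cell.

Lemma RE_sub (x y : CC) : RE (x - y) = RE x - RE y. Proof. by case: x; case: y. Qed.
Lemma IM_sub (x y : CC) : IM (x - y) = IM x - IM y. Proof. by case: x; case: y. Qed.

Lemma abs2_le1_parts (x : CC) : abs2 x <= 1 -> -1 <= RE x <= 1 /\ -1 <= IM x <= 1.
Proof.
rewrite abs2E => h; have h1 := sqr_ge0 (RE x); have h2 := sqr_ge0 (IM x).
split; apply/andP; split; nra.
Qed.

Lemma nc_le1 (x : CC) : abs2 x <= 1 -> nc x <= 1.
Proof. rewrite -nc2 => h; have := nc_ge0 x; nra. Qed.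

Lemma ncR (s : RR) : 0 <= s -> nc s%:C = s.
Proof. by move=> s0; rewrite /Normc.normc /= expr0n addr0 sqrtr_sqr ger0_norm. Qed.

Lemma ncN (x : CC) : nc (- x) = nc x.
Proof. by case: x => a b; rewrite /Normc.normc /= !sqrrN. Qed.

Lemma abs2_lb (s : RR) (z : CC) : 0 <= s -> s ^+ 2 - 2 * s * nc z <= abs2 (s%:C + z).
Proof.
move=> s0; have h : s <= nc (s%:C + z) + nc z.
  have := ncD (s%:C + z) (- z); rewrite addrK ncR // ncN //.
rewrite -nc2; set X := nc _ in h *; set n := nc z in h *.
have X0 : 0 <= X by exact: nc_ge0. have n0 : 0 <= n by exact: nc_ge0.
have [sn|ns] := lerP s n.
  have : s * (s - 2 * n) <= 0 by rewrite mulr_ge0_le0 //; lra.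
  have := sqr_ge0 X; nra.
have h1 : 0 <= s - n by lra.
have h2 : s - n <= X by lra.
have : (s - n) ^+ 2 <= X ^+ 2 by rewrite ler_pXn2r // ?nnegrE.
nra.
Qed.

Lemma CS2 (P Q x y : CC) : abs2 (P * x + Q * y) <= (abs2 P + abs2 Q) * (abs2 x + abs2 y).
Proof.
have e : (abs2 P + abs2 Q) * (abs2 x + abs2 y) = abs2 (P * x + Q * y) + abs2 (conjc P * y - conjc Q * x).
  case: P => p1 p2; case: Q => q1 q2; case: x => x1 x2; case: y => y1 y2.
  rewrite !abs2E /RE /IM /=; ring.
by rewrite e lerDl abs2_ge0.
Qed.

Lemma cellc_close (del : RR) (x y : CC) : 0 < del -> abs2 x <= 1 -> abs2 y <= 1 ->
  (cellr del (RE x), cellr del (IM x)) = (cellr del (RE y), cellr del (IM y)) ->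
  nc (x - y) <= 2 * del.
Proof.
move=> d0 /abs2_le1_parts [hx1 hx2] /abs2_le1_parts [hy1 hy2] [e1 e2].
have := cellr_close d0 hx1 hy1 e1; have := cellr_close d0 hx2 hy2 e2.
rewrite !ltr_norml => /andP [a1 a2] /andP [b1 b2].
have : abs2 (x - y) <= (2 * del) ^+ 2.
  rewrite abs2E RE_sub IM_sub; nra.
rewrite -nc2 => h; have := nc_ge0 (x - y); nra.
Qed.

Lemma le_via (x y : RR) : 0 <= y -> (forall c, 0 <= c -> c < x -> c <= y) -> x <= y.
Proof.
move=> y0 h; rewrite leNgt; apply/negP => yx.
have := h ((x + y) / 2); rewrite !ler_pdivrMr ?ltr_pdivrMr //; lra.
Qed.

Lemma in_F_scale Sigma (A : QA Sigma) (k : CC) (u : 'cV[CC]_(Defs.dim A)) : in_F u -> in_F (k *: u).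
Proof.
rewrite /in_F => h; have -> : (k *: u)^T = k *: u^T by apply/matrixP => i j; rewrite !mxE.
exact: scalemx_sub.
Qed.

Lemma in_F0 Sigma (A : QA Sigma) : in_F (0 : 'cV[CC]_(Defs.dim A)).
Proof. by rewrite /in_F trmx0 sub0mx. Qed.

Lemma norm2Z d k (u : 'cV[CC]_d) : norm2 (k *: u) = abs2 k * norm2 u.
Proof. rewrite /norm2 mulr_sumr; apply: eq_bigr => i _; by rewrite mxE abs2M. Qed.

Lemma inner0l d (s : 'cV[CC]_d) : inner 0 s = 0.
Proof. rewrite innerE big1 // => i _; by rewrite mxE rmorph0 mul0r. Qed.

Lemma abs2_0 : abs2 0 = 0. Proof. by rewrite abs2E /RE /IM /= expr0n addr0. Qed.

Lemma norm2_eq0 d (u : 'cV[CC]_d) : norm2 u = 0 -> u = 0.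
Proof.
move=> /eqP; rewrite psumr_eq0 => [/allP h|i _]; last exact: abs2_ge0.
apply/matrixP => i j; rewrite (ord1 j) mxE; have := h i (mem_index_enum i).
by rewrite -nc2 expf_eq0 /= => /eqP /Normc.eq0_normc.
Qed.

Section ExtThms.
Variables (Sigma : finType) (A : QA Sigma) (a b : RR).
Hypothesis hab : a ^+ 2 + b ^+ 2 = 1.
Hypothesis a0 : 0 < a.
Hypothesis b0 : 0 <= b.

Lemma a2_pos : 0 < a ^+ 2. Proof. exact: exprn_gt0. Qed.

Theorem ext_scale w : fND (ext A false hab) w = a ^+ 2 * fND A w.
Proof.
have a2 := a2_pos.
apply/eqP; rewrite eq_le; apply/andP; split.
  apply: le_via; first by rewrite mulr_ge0 ?fND_ge0 // ltW.
  move=> c c0 hc.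
  have [psi [ns [t [hF hu hns ct hb]]]] := fND_EX c0 hc.
  rewrite -(vsubmxK psi) in hF hu hb.
  move/in_F_ext: hF => [hF /= /eqP hv].
  rewrite hv in hu hb.
  have hu' : inner (usubmx psi) (usubmx psi) = 1.
    by rewrite inner_self; move: hu; rewrite inner_col_self mxE abs2_0 addr0.
  have hb' : forall i, t / a ^+ 2 <= abs2 (inner (usubmx psi) (run A w (ns i))).
    move=> i; have := hb i; rewrite inner_ext_run mxE conjc0 mul0r addr0 abs2M abs2R.
    by rewrite ler_pdivrMr // mulrC.
  have := fND_LB hF hu' hns hb'; rewrite ler_pdivrMr // => h.
  by apply: ltW; apply: lt_le_trans ct _; rewrite mulrC.
apply: le_via; first exact: fND_ge0.
move=> c c0 hc.
have hc' : c / a ^+ 2 < fND A w by rewrite ltr_pdivrMr // mulrC.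
have [psi [ns [t [hF hu hns ct hb]]]] := fND_EX (divr_ge0 c0 (ltW a2)) hc'.
apply: (@fND_LB _ (ext A false hab) w (col_mx psi 0) ns) => //.
- by apply/in_F_ext; split => //; rewrite eqxx orbT.
- by rewrite inner_col_self mxE abs2_0 addr0 unit_norm2.
move=> i; rewrite inner_ext_run mxE conjc0 mul0r addr0 abs2M abs2R.
move: ct; rewrite ltr_pdivrMr // => ct; apply: ltW; apply: lt_le_trans ct _.
by rewrite mulrC ler_pM2l.
Qed.

Lemma shift_id (a' kap q b' : RR) (z y : CC) :
  a'%:C * (conjc (kap%:C * z) * y) + q%:C * b'%:C =
  (a' * kap * abs2 z + q * b')%:C + (a' * kap)%:C * (conjc z * (y - z)).
Proof.
rewrite abs2E /RE /IM; case: z => z1 z2; case: y => y1 y2.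
apply/eqP; rewrite eq_complex /=; apply/andP; split; apply/eqP; ring.
Qed.

Lemma abs2_1 : abs2 1 = 1. Proof. by rewrite abs2E /RE /IM /= expr0n expr1n addr0. Qed.

Lemma norm2_0 d : norm2 (0 : 'cV[CC]_d) = 0.
Proof. by rewrite /norm2 big1 // => i _; rewrite mxE abs2_0. Qed.

Theorem ext_shift w : fND (ext A true hab) w = a ^+ 2 * fND A w + b ^+ 2.
Proof.
have a2 := a2_pos.
have f0 := fND_ge0 A w.
have a21 : a ^+ 2 <= 1 by rewrite -hab lerDl sqr_ge0.
apply/eqP; rewrite eq_le; apply/andP; split.
  apply: le_via; first by rewrite addr_ge0 ?sqr_ge0 // mulr_ge0 // ltW.
  move=> c c0 hc.
  have [psi [ns [t [hF hu hns ct hb]]]] := fND_EX c0 hc.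
  rewrite -(vsubmxK psi) in hF hu hb.
  move/in_F_ext: hF => [hF _].
  move: hu; rewrite inner_col_self => -[hN].
  have [N0|Npos] := eqVneq (norm2 (usubmx psi)) 0.
    have u0 := norm2_eq0 N0.
    have := hb 0%N; rewrite inner_ext_run u0 inner0l mulr0 add0r abs2M abs2J abs2R.
    rewrite N0 add0r in hN; rewrite hN mul1r => h.
    have := mulr_ge0 (ltW a2) f0; move: h; lra.
  have Ngt : 0 < norm2 (usubmx psi) by rewrite lt_def Npos norm2_ge0.
  set sN := Num.sqrt (norm2 (usubmx psi)).
  have sN0 : 0 < sN by rewrite sqrtr_gt0.
  pose psi1 := (sN^-1)%:C *: usubmx psi.
  have hF1 : in_F psi1 by exact: in_F_scale.
  have hu1 : inner psi1 psi1 = 1.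
    by rewrite inner_self norm2Z abs2R exprVn sqr_sqrtr ?norm2_ge0 // mulVf // gt_eqF.
  have hX : forall s, inner (usubmx psi) s = sN%:C * inner psi1 s.
    move=> s; rewrite /psi1 innerZl conjc_real mulrA -rmorphM mulfV ?gt_eqF //.
    by rewrite mul1r.
  have hb1 : forall i, (t - b ^+ 2) / a ^+ 2 <= abs2 (inner psi1 (run A w (ns i))).
    move=> i; have := hb i; rewrite inner_ext_run hX mulrCA => h.
    have := le_trans h (CS2 _ _ _ _).
    rewrite abs2R abs2J abs2M !abs2R sqr_sqrtr ?norm2_ge0 // hN mul1r => h2.
    by rewrite ler_pdivrMr // mulrC; lra.
  have := fND_LB hF1 hu1 hns hb1; rewrite ler_pdivrMr // => h.
  by rewrite mulrC in h; apply: ltW; apply: lt_le_trans ct _; lra.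
apply: le_via; first exact: fND_ge0.
move=> c c0 hc.
have [cb|bc] := lerP c (b ^+ 2).
  apply: (@fND_LB _ (ext A true hab) w (col_mx 0 1%:M) id) => //.
  - by apply/in_F_ext; split; [exact: in_F0|].
  - by rewrite inner_col_self norm2_0 add0r mxE /= ?mulr1n abs2_1.
  move=> i; rewrite inner_ext_run inner0l mulr0 add0r abs2M abs2J abs2R mxE /= ?mulr1n.
  by rewrite abs2_1 mul1r.
have lam0 : 0 <= (c - b ^+ 2) / a ^+ 2 by rewrite divr_ge0 // ?subr_ge0 ltW.
have hlam : (c - b ^+ 2) / a ^+ 2 < fND A w by rewrite ltr_pdivrMr // mulrC; lra.
have [psi [ns [t [hF hu hns ct hb]]]] := fND_EX lam0 hlam.
move: ct; rewrite ltr_pdivrMr // => ct.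
set sig := a ^+ 2 * t + b ^+ 2 - c.
have sig0 : 0 < sig by rewrite /sig; lra.
set del := sig / 4.
have del0 : 0 < del by rewrite divr_gt0.
have Yle : forall i, abs2 (inner psi (run A w (ns i))) <= 1.
  by move=> i; apply: abs2_inner_le1 hu (run_unit _ _ _).
have [cl hcl] := inf_pigeon (fun i => (cellr del (RE (inner psi (run A w (ns i)))),
                                      cellr del (IM (inner psi (run A w (ns i)))))).
have [m [hm hmc]] := io_SI hcl.
set z0 := inner psi (run A w (ns (m 0%N))).
have close : forall j, nc (inner psi (run A w (ns (m j))) - z0) <= 2 * del.
  move=> j; apply: cellc_close; [exact: del0 | exact: Yle | exact: Yle |].
  by move: (hmc j) (hmc 0%N) => /= -> ->.
have z0t : t <= abs2 z0 := hb (m 0%N).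
have z01 : nc z0 <= 1 by apply: nc_le1; exact: Yle.
set K := a ^+ 2 * abs2 z0 + b ^+ 2.
have Kge : a ^+ 2 * t + b ^+ 2 <= K by rewrite /K lerD2r ler_pM2l.
have K0 : 0 < K by move: sig0; rewrite /sig; lra.
set s := Num.sqrt K.
have s0 : 0 < s by rewrite sqrtr_gt0.
have sK : s ^+ 2 = K by rewrite sqr_sqrtr // ltW.
set kap := a / s. set q := b / s.
have kap0 : 0 <= a * kap by rewrite mulr_ge0 // ?divr_ge0 // ltW.
have e1 : a * kap * abs2 z0 + q * b = s.
  have -> : a * kap * abs2 z0 + q * b = K / s by rewrite /kap /q /K; field; rewrite gt_eqF.
  by rewrite -sK expr2 mulrK // unitfE gt_eqF.
have e2 : s * (a * kap) = a ^+ 2 by rewrite /kap; field; rewrite gt_eqF.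
apply: (@fND_LB _ (ext A true hab) w (col_mx ((kap%:C * z0) *: psi) ((q%:C)%:M)) (ns \o m)).
- by apply/in_F_ext; split => //; exact: in_F_scale.
- rewrite inner_col_self norm2Z (unit_norm2 hu) mulr1 mxE /= ?mulr1n abs2M !abs2R.
  congr (_%:C); rewrite /kap /q; apply/eqP; rewrite -subr_eq0; apply/eqP.
  have -> : (a / s) ^+ 2 * abs2 z0 + (b / s) ^+ 2 - 1 = (K - s ^+ 2) / s ^+ 2.
    by rewrite /K; field; rewrite gt_eqF.
  by rewrite sK subrr mul0r.
- exact: SI_comp.
move=> j /=; rewrite inner_ext_run innerZl mxE eqxx mulr1n conjc_real.
rewrite shift_id e1.
apply: le_trans (abs2_lb _ (ltW s0)).
rewrite ncM ncR // ncM ncJ.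
set X := nc z0 * nc _.
have -> : 2 * s * (a * kap * X) = 2 * (a ^+ 2 * X) by rewrite -e2; ring.
rewrite sK.
have hc1 := close j.
have hz := nc_ge0 z0.
have he := nc_ge0 (inner psi (run A w (ns (m j))) - z0).
have h4 : X <= 2 * del by rewrite /X -[2 * del]mul1r ler_pM.
have h5 : a ^+ 2 * X <= 2 * del.
  rewrite -[2 * del]mul1r; apply: ler_pM => //; [exact: sqr_ge0 | exact: mulr_ge0].
move: h5 Kge; rewrite /del /sig; lra.
Qed.

End ExtThms.


Lemma innerBr d (a b c : 'cV[CC]_d) : inner a (b - c) = inner a b - inner a c.
Proof. rewrite !innerE -sumrB; apply: eq_bigr => i _; by rewrite !mxE mulrBr. Qed.

Lemma iter_inner d (V : 'M[CC]_d) n y : unitary V ->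
  inner (iter n (mulmx V) y) (iter n (mulmx V) y) = inner y y.
Proof. by move=> hV; elim: n => //= n IH; rewrite inner_unitary. Qed.

Lemma iterB d (V : 'M[CC]_d) n (y z : 'cV[CC]_d) :
  iter n (mulmx V) (y - z) = iter n (mulmx V) y - iter n (mulmx V) z.
Proof. by elim: n => //= n ->; rewrite mulmxBr. Qed.

Lemma norm2_inner d (y z : 'cV[CC]_d) : inner y y = inner z z -> norm2 y = norm2 z.
Proof. by rewrite !inner_self => -[]. Qed.

Lemma coord_le d (y : 'cV[CC]_d) l : abs2 (y l 0) <= norm2 y.
Proof.
rewrite /norm2 (bigD1 l) //= lerDl; apply: sumr_ge0 => i _; exact: abs2_ge0.
Qed.

Lemma abs2_close (A B : CC) (eta : RR) : nc A <= 1 -> 0 <= eta -> nc (A - B) <= eta ->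
  abs2 A - 2 * eta <= abs2 B.
Proof.
move=> hA e0 hAB; have h : nc A <= nc B + nc (A - B).
  by have := ncD B (A - B); rewrite addrC subrK.
rewrite -!nc2; have := nc_ge0 A; have := nc_ge0 B; have := nc_ge0 (A - B).
set x := nc A in h hA *; set y := nc B in h *; set z := nc (A - B) in h hAB * => z0 y0 x0.
have [xe|ex] := lerP x eta.
  have h3 : x * x <= x * eta by apply: ler_wpM2l.
  have h4 : x * eta <= 1 * eta by apply: ler_wpM2r.
  have : x ^+ 2 <= eta by rewrite expr2; lra.
  have := sqr_ge0 y; lra.
have h1 : 0 <= x - eta by lra.
have h2 : x - eta <= y by lra.
have : (x - eta) ^+ 2 <= y ^+ 2 by rewrite !expr2; apply: ler_pM.
have h5 : x * eta <= 1 * eta by apply: ler_wpM2r.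
rewrite !expr2 => h6; nra.
Qed.


Lemma recur d (V : 'M[CC]_d) (t psi : 'cV[CC]_d) (e : RR) : unitary V -> inner t t = 1 ->
  inner psi psi = 1 -> 0 < e -> forall N, exists k, (N <= k)%N /\
  abs2 (inner psi t) - e <= abs2 (inner psi (iter k (mulmx V) t)).
Proof.
move=> hV ht hpsi e0.
pose eta := e / 2.
have eta0 : 0 < eta by rewrite divr_gt0.
pose D : RR := d%:R.
have D0 : 0 <= D by rewrite /D ler0n.
pose del := eta / (2 * (D + 1)).
have del0 : 0 < del by rewrite divr_gt0 // mulr_gt0 //; lra.
pose x k := iter k (mulmx V) t.
have xu : forall k, inner (x k) (x k) = 1 by move=> k; rewrite iter_inner.
have xc : forall k l, abs2 (x k l 0) <= 1.
  by move=> k l; rewrite -(unit_norm2 (xu k)); exact: coord_le.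
pose cv k := [ffun l : 'I_d => (cellr del (RE (x k l 0)), cellr del (IM (x k l 0)))].
have [cl hcl] := inf_pigeon cv.
have [i0 [_ hi0]] := hcl 0%N.
move=> N.
have [j [hj hjc]] := hcl (N + i0).+1.
exists (j - i0)%N; split; first by lia.
have hjk : j = (i0 + (j - i0))%N by lia.
have xj : x j = iter i0 (mulmx V) (x (j - i0)%N) by rewrite {1}hjk /x iterD.
have close : forall l, nc (x i0 l 0 - x j l 0) <= 2 * del.
  move=> l; apply: cellc_close => //.
  by have /ffunP /(_ l) := etrans hi0 (esym hjc); rewrite /cv !ffunE.
have hu : iter i0 (mulmx V) (t - x (j - i0)%N) = x i0 - x j by rewrite iterB xj.
have nu : norm2 (t - x (j - i0)%N) <= eta ^+ 2.
  rewrite -(norm2_inner (iter_inner i0 (t - x (j - i0)%N) hV)) hu /norm2.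
  have hs : \sum_(l < d) abs2 ((x i0 - x j) l 0) <= \sum_(l < d) (2 * del) ^+ 2.
    apply: ler_sum => l _; rewrite !mxE -nc2.
    by rewrite ler_pXn2r ?nnegrE ?nc_ge0 ?close // mulr_ge0 // ltW.
  apply: le_trans hs _.
  rewrite sumr_const card_ord -[(2 * del) ^+ 2 *+ d]mulr_natr.
  have e1 : (2 * del) ^+ 2 * d%:R = eta ^+ 2 * (D / (D + 1) ^+ 2).
    by rewrite /del /D; field; rewrite natr1 pnatr_eq0.
  rewrite e1.
  apply: ler_piMr; first exact: sqr_ge0.
  rewrite ler_pdivrMr ?exprn_gt0 //; last lra.
  by rewrite mul1r; nra.
have ni : nc (inner psi (t - x (j - i0)%N)) <= eta.
  have := nc_inner_le psi (t - x (j - i0)%N) eta0; rewrite (unit_norm2 hpsi) mulr1.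
  move=> h; apply: le_trans h _.
  have : norm2 (t - x (j - i0)%N) / eta <= eta by rewrite ler_pdivrMr // -expr2.
  lra.
rewrite innerBr in ni.
have := abs2_close (nc_le1 (abs2_inner_le1 hpsi ht)) (ltW eta0) ni.
by rewrite /eta; have -> : 2 * (e / 2) = e by field.
Qed.


Lemma ord2 (i : 'I_2) : i = 0 \/ i = 1.
Proof. by case: i => [[|[|k]] h] //; [left|right]; apply/val_inj. Qed.

Definition o0 : 'I_2 := @Ordinal 2 0 isT.
Definition o1 : 'I_2 := @Ordinal 2 1 isT.
Lemma sum2 (V : nmodType) (F : 'I_2 -> V) : \sum_(i < 2) F i = F o0 + F o1.
Proof.
rewrite !big_ord_recl big_ord0 addr0; congr (F _ + F _); exact/val_inj.
Qed.

Definition r35 : RR := 3 / 5.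
Definition r45 : RR := 4 / 5.
Definition Rm : 'M[CC]_2 :=
  \matrix_(i, j) (if i == j then r35%:C else if i == 0 then (- r45)%:C else r45%:C).
Definition e1 : 'cV[CC]_2 := \col_i (if i == 0 then 1 else 0).
Definition F0 : 'M[CC]_2 := \matrix_(i, j) (if (i == 0) && (j == 0) then 1 else 0).

Lemma Rm_unitary : unitary Rm.
Proof.
apply/matrixP => i j; rewrite !mxE !big_ord_recl big_ord0 !mxE.
have h1 : r35 * r35 + r45 * r45 = 1 by rewrite /r35 /r45; field.
case: (ord2 i) => ->; case: (ord2 j) => -> /=;
  apply/eqP; rewrite eq_complex /=; apply/andP; split; apply/eqP;
  rewrite ?h1; try ring; rewrite -h1; ring.
Qed.

Lemma e1_unit : inner e1 e1 = 1.
Proof.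
rewrite innerE !big_ord_recl big_ord0 !mxE /=.
by apply/eqP; rewrite eq_complex /=; apply/andP; split; apply/eqP; ring.
Qed.

Lemma id_unitary d : unitary (1%:M : 'M[CC]_d).
Proof. by rewrite /unitary adj1 mul1mx. Qed.

Section A0.
Variables (Sigma : finType) (a : Sigma).

Definition U0 (x : Sigma) : 'M[CC]_2 := if x == a then Rm else 1%:M.
Lemma U0_unitary x : unitary (U0 x).
Proof. rewrite /U0; case: (x == a); [exact: Rm_unitary | exact: id_unitary]. Qed.

Definition A0 : QA Sigma := @Build_QA Sigma 2 e1 U0 F0 e1_unit U0_unitary.

Lemma in_F_e1 : in_F (A := A0) e1.
Proof.
apply/submxP; exists e1^T; apply/matrixP => i j.
rewrite !mxE !big_ord_recl big_ord0 !mxE.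
by case: (ord2 j) => -> /=; rewrite ?mulr0 ?mul0r ?addr0 ?mulr1.
Qed.

Lemma in_F0_coord (psi : 'cV[CC]_2) : in_F (A := A0) psi -> psi o1 0 = 0.
Proof.
move=> /submxP [D] /matrixP /(_ 0 o1); rewrite !mxE sum2 !mxE /=.
by rewrite !mulr0 !addr0.
Qed.

Lemma inner_F0 (psi v : 'cV[CC]_2) : in_F (A := A0) psi -> inner psi psi = 1 ->
  abs2 (inner psi v) = abs2 (v o0 0).
Proof.
move=> hF hu; have h1 := in_F0_coord hF.
have : norm2 psi = 1 by exact: unit_norm2.
rewrite innerE /norm2 !sum2 h1 abs2_0 !addr0 => hn.
by rewrite rmorph0 mul0r addr0 abs2M abs2J hn mul1r.
Qed.

Lemma run_A0_a n : run A0 (fun _ => a) n = iter n (mulmx Rm) e1.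
Proof. by elim: n => //= n ->; rewrite /U0 eqxx. Qed.

Lemma run_A0_w (b : Sigma) n m : b != a ->
  run A0 (fun k => if (k < n)%N then a else b) m = iter (minn m n) (mulmx Rm) e1.
Proof.
move=> hb; elim: m => [|m IH] /=; first by rewrite min0n.
rewrite IH /U0; case: ltnP => hm.
  by rewrite /= eqxx; have -> : minn m.+1 n = m.+1 by lia.
by rewrite /= (negbTE hb) mul1mx; have -> : minn m.+1 n = n by lia.
Qed.

End A0.

Lemma ord2' (i : 'I_2) : i = o0 \/ i = o1.
Proof. by case: i => [[|[|k]] h] //; [left|right]; apply/val_inj. Qed.

Fixpoint ab (n : nat) : int * int :=
  match n with
  | 0 => (1, 0)
  | n'.+1 => let: (x, y) := ab n' in (3 * x - 4 * y, 4 * x + 3 * y)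
  end.

Lemma iter_Rm n : iter n (mulmx Rm) e1 =
  \col_i ((((if i == o0 then (ab n).1 else (ab n).2)%:~R) / (5 ^+ n : RR))%:C).
Proof.
elim: n => [|n IH].
  apply/matrixP => i j; rewrite !mxE expr0 divr1.
  by case: (ord2' i) => -> /=.
rewrite /= IH; case: (ab n) => x y /=.
apply/matrixP => i j; rewrite !mxE sum2 !mxE /=.
have c1 : ((3 * x - 4 * y)%:~R : RR) = 3 * x%:~R - 4 * y%:~R by rewrite rmorphB !rmorphM.
have c2 : ((4 * x + 3 * y)%:~R : RR) = 4 * x%:~R + 3 * y%:~R by rewrite rmorphD !rmorphM.
have p5 : (5 ^+ n : RR) != 0 by rewrite expf_neq0 // pnatr_eq0.
case: (ord2' i) => -> /=; rewrite ?c1 ?c2;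
  apply/eqP; rewrite eq_complex /=; apply/andP; split; apply/eqP;
  rewrite /r35 /r45 ?exprS; field; rewrite ?p5 //.
Qed.

Lemma ab_mod n : (0 < n)%N -> exists k l : int, ab n = (3 + 5 * k, 4 + 5 * l).
Proof.
elim: n => [//|n IH] _.
case: n IH => [|n] IH; first by exists 0, 0.
have [k [l e]] := IH isT.
rewrite /= -/(ab n.+1) e; exists (3 * k - 4 * l - 2), (4 + 4 * k + 3 * l).
congr pair; ring.
Qed.

Lemma v10_ne0 n : (0 < n)%N -> (iter n (mulmx Rm) e1) o1 0 != 0.
Proof.
move=> n0; rewrite iter_Rm mxE /=.
have [k [l ->]] := ab_mod n0; rewrite /=.
have p5 : (5 ^+ n : RR) != 0 by rewrite expf_neq0 // pnatr_eq0.
have -> : forall r : RR, (r%:C == 0 :> CC) = (r == 0) by move=> r; rewrite eq_complex /= eqxx andbT.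
rewrite mulf_eq0 negb_or intr_eq0 invr_eq0; apply/andP; split; first lia.
by rewrite invr_eq0 expf_neq0 // pnatr_eq0.
Qed.

Lemma v00_lt1 n : (0 < n)%N -> abs2 ((iter n (mulmx Rm) e1) o0 0) < 1.
Proof.
move=> n0; have hn : norm2 (iter n (mulmx Rm) e1) = 1.
  by apply: unit_norm2; rewrite iter_inner ?e1_unit //; exact: Rm_unitary.
move: hn; rewrite /norm2 sum2 => hn.
have : 0 < abs2 ((iter n (mulmx Rm) e1) o1 0).
  rewrite lt_def abs2_ge0 andbT; apply/negP => /eqP.
  rewrite -nc2 => /eqP; rewrite expf_eq0 /= => /eqP /Normc.eq0_normc h.
  by move: (v10_ne0 n0); rewrite h eqxx.
lra.
Qed.


Lemma mid_lt (x y : RR) : x < y -> x < y - (y - x) / 2.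
Proof. move=> h; lra. Qed.

Lemma part3 (Sigma : finType) : (1 < #|Sigma|)%N -> forall lam : RR, 0 <= lam < 1 ->
     ~ (QBA_class (@lang_eq1 Sigma) `<=` QBA_class (@lang_gt Sigma lam)).
Proof.
move=> hS lam /andP [l0 l1] hsub.
have [a [b [_ _ hab]]] := card_gt1P hS.
have hba : b != a by rewrite eq_sym.
have [B hB] := hsub (lang_eq1 (A0 a)) (ex_intro _ (A0 a) erefl).
have f1 : fND (A0 a) (fun _ => a) = 1.
  apply/eqP; rewrite eq_le fND_le1 /=; rewrite leNgt; apply/negP => hlt.
  set f := fND _ _ in hlt.
  have eps0 : 0 < (1 - f) / 2 by rewrite divr_gt0 // subr_gt0.
  have [ns [hns hp]] := io_SI (recur Rm_unitary e1_unit e1_unit eps0).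
  have e11 : abs2 (inner e1 e1) = 1 by rewrite e1_unit abs2_1.
  have : f >= 1 - (1 - f) / 2.
    apply: fND_LB (in_F_e1 a) e1_unit hns _ => i; rewrite run_A0_a.
    by have := hp i; rewrite e11.
  lra.
have aw : lam < fND B (fun _ => a).
  have : (lang_gt lam B) (fun _ => a) by rewrite -hB; exact: f1.
  by [].
have [psi [ns [t [hF hu hns lt hb]]]] := fND_EX l0 aw.
pose n := ns 1%N.
have n0 : (0 < n)%N by have := SI_ge hns 1.
pose wn := fun k => if (k < n)%N then a else b.
have runw1 : forall m, (m <= n)%N -> run B wn m = run B (fun _ => a) m.
  elim => // m IH hm /=; rewrite IH ?(ltnW hm) // /wn hm //.
have runw : forall k, run B wn (n + k) = iter k (mulmx (U B b)) (run B (fun _ => a) n).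
  elim => [|k IH]; first by rewrite addn0 runw1.
  by rewrite addnS /= IH /wn ltnNge leq_addr.
have tn : t <= abs2 (inner psi (run B (fun _ => a) n)) := hb 1%N.
have eps0 : 0 < (t - lam) / 2 by rewrite divr_gt0 // subr_gt0.
have [ks [hks hk]] := io_SI (recur (U_unitary B b) (run_unit B (fun _ => a) n) hu eps0).
have hSI : strictly_increasing (fun i => n + ks i)%N by move=> i; rewrite ltn_add2l hks.
have hb2 : forall i, t - (t - lam)/2 <= abs2 (inner psi (run B wn (n + ks i)%N)).
  move=> i; rewrite runw.
  apply: le_trans (hk i); rewrite lerD2r; exact: tn.
have gt : lam < fND B wn.
  apply: lt_le_trans (@fND_LB _ B wn psi (fun i => n + ks i)%N (t - (t - lam)/2) hF hu hSI hb2).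
  exact: mid_lt.
have : (lang_gt lam B) wn by exact: gt.
rewrite -hB => h1; change (fND (A0 a) wn = 1) in h1.
have := v00_lt1 n0; set q := abs2 _ => hq.
have hle : fND (A0 a) wn <= q.
  rewrite leNgt; apply/negP => hq'.
  have [psi' [ns' [t' [hF' hu' hns' lt' hb']]]] := fND_EX (abs2_ge0 _) hq'.
  have := hb' n; rewrite (@inner_F0 Sigma a psi' _ hF' hu') (@run_A0_w Sigma a b n (ns' n) hba).
  have -> : minn (ns' n) n = n by apply/minn_idPr; exact: SI_ge hns' n.
  rewrite -/q => h; have := lt_le_trans lt' h; by rewrite ltxx.
by have := le_lt_trans hle hq; rewrite h1 ltxx.
Qed.


Section Classes.
Variable Sigma : finType.

Lemma scale_ex (A : QA Sigma) (p : RR) : 0 < p -> p <= 1 ->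
  exists A' : QA Sigma, forall w, fND A' w = p * fND A w.
Proof.
move=> p0 p1.
have hab : Num.sqrt p ^+ 2 + Num.sqrt (1 - p) ^+ 2 = 1.
  by rewrite !sqr_sqrtr ?subr_ge0 ?(ltW p0) //; ring.
exists (ext A false hab) => w.
by rewrite ext_scale ?sqrtr_gt0 ?sqrtr_ge0 // sqr_sqrtr // ltW.
Qed.

Lemma shift_ex (A : QA Sigma) (p : RR) : 0 < p -> p <= 1 ->
  exists A' : QA Sigma, forall w, fND A' w = p * fND A w + (1 - p).
Proof.
move=> p0 p1.
have hab : Num.sqrt p ^+ 2 + Num.sqrt (1 - p) ^+ 2 = 1.
  by rewrite !sqr_sqrtr ?subr_ge0 ?(ltW p0) //; ring.
exists (ext A true hab) => w.
by rewrite ext_shift ?sqrtr_gt0 ?sqrtr_ge0 // !sqr_sqrtr // ?subr_ge0 // ltW.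
Qed.

Lemma eq_set_iff (P Q : (nat -> Sigma) -> Prop) :
  (forall w, P w <-> Q w) -> [set w | P w] = [set w | Q w].
Proof. by move=> h; apply/seteqP; split => w /h. Qed.

Lemma class_sub (L1 L2 : QA Sigma -> set (nat -> Sigma)) :
  (forall A, exists A', L1 A = L2 A') -> QBA_class L1 `<=` QBA_class L2.
Proof. by move=> h X [A ->]; have [A' e] := h A; exists A'. Qed.

Lemma gt_sub (mu lam : RR) : 0 < mu < 1 -> 0 < lam < 1 ->
  QBA_class (@lang_gt Sigma mu) `<=` QBA_class (@lang_gt Sigma lam).
Proof.
move=> /andP [m0 m1] /andP [l0 l1]; apply: class_sub => A.
have [lm|ml] := lerP lam mu.
  have p0 : 0 < lam / mu by rewrite divr_gt0.
  have p1 : lam / mu <= 1 by rewrite ler_pdivrMr // mul1r.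
  have [A' hA'] := scale_ex A p0 p1.
  exists A'; apply: eq_set_iff => w; rewrite hA'.
  have e : lam = lam / mu * mu by rewrite mulfVK // gt_eqF.
  by rewrite [X in X < _ * _]e ltr_pM2l.
have p0 : 0 < (1 - lam) / (1 - mu) by rewrite divr_gt0 // subr_gt0.
have p1 : (1 - lam) / (1 - mu) <= 1 by rewrite ler_pdivrMr ?subr_gt0 // mul1r lerD2l lerN2 ltW.
have [A' hA'] := shift_ex A p0 p1.
exists A'; apply: eq_set_iff => w; rewrite hA'.
set p := (1 - lam) / (1 - mu).
have e : lam = p * mu + (1 - p) by rewrite /p; field; rewrite subr_eq0 gt_eqF.
by rewrite [X in X < _ + _]e ltrD2r ltr_pM2l.
Qed.

Lemma ge_sub (mu lam : RR) : 0 < mu < 1 -> 0 < lam < 1 ->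
  QBA_class (@lang_ge Sigma mu) `<=` QBA_class (@lang_ge Sigma lam).
Proof.
move=> /andP [m0 m1] /andP [l0 l1]; apply: class_sub => A.
have [lm|ml] := lerP lam mu.
  have p0 : 0 < lam / mu by rewrite divr_gt0.
  have p1 : lam / mu <= 1 by rewrite ler_pdivrMr // mul1r.
  have [A' hA'] := scale_ex A p0 p1.
  exists A'; apply: eq_set_iff => w; rewrite hA'.
  have e : lam = lam / mu * mu by rewrite mulfVK // gt_eqF.
  by rewrite [X in X <= _ * _]e ler_pM2l.
have p0 : 0 < (1 - lam) / (1 - mu) by rewrite divr_gt0 // subr_gt0.
have p1 : (1 - lam) / (1 - mu) <= 1 by rewrite ler_pdivrMr ?subr_gt0 // mul1r lerD2l lerN2 ltW.
have [A' hA'] := shift_ex A p0 p1.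
exists A'; apply: eq_set_iff => w; rewrite hA'.
set p := (1 - lam) / (1 - mu).
have e : lam = p * mu + (1 - p) by rewrite /p; field; rewrite subr_eq0 gt_eqF.
by rewrite [X in X <= _ + _]e lerD2r ler_pM2l.
Qed.

Lemma gt0_sub (mu : RR) : 0 < mu < 1 ->
  QBA_class (@lang_gt0 Sigma) `<=` QBA_class (@lang_gt Sigma mu).
Proof.
move=> /andP [m0 m1]; apply: class_sub => A.
have p0 : 0 < 1 - mu by rewrite subr_gt0.
have p1 : 1 - mu <= 1 by rewrite gerBl ltW.
have [A' hA'] := shift_ex A p0 p1.
exists A'; apply: eq_set_iff => w; rewrite hA'.
rewrite (_ : 1 - (1 - mu) = mu); last by ring.
by rewrite ltrDr pmulr_rgt0.
Qed.

Lemma eq1_sub (mu : RR) : 0 < mu < 1 ->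
  QBA_class (@lang_eq1 Sigma) `<=` QBA_class (@lang_ge Sigma mu).
Proof.
move=> /andP [m0 m1]; apply: class_sub => A.
have [A' hA'] := scale_ex A m0 (ltW m1).
exists A'; apply: eq_set_iff => w; rewrite hA'.
rewrite -[X in X <= _]mulr1 ler_pM2l //; split => [->//|h].
by apply/eqP; rewrite eq_le h fND_le1.
Qed.

End Classes.

Local Close Scope complex_scope.

Theorem theorem5 (Sigma : finType) :
  (forall mu lam : RR, 0 < mu < 1 -> 0 < lam < 1 ->
     QBA_class (@lang_gt0 Sigma) `<=` QBA_class (@lang_gt Sigma mu) /\
     QBA_class (@lang_gt Sigma mu) = QBA_class (@lang_gt Sigma lam)) /\
  (forall mu lam : RR, 0 < mu < 1 -> 0 < lam < 1 ->
     QBA_class (@lang_eq1 Sigma) `<=` QBA_class (@lang_ge Sigma mu) /\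
     QBA_class (@lang_ge Sigma mu) = QBA_class (@lang_ge Sigma lam)) /\
  ((1 < #|Sigma|)%N -> forall lam : RR, 0 <= lam < 1 ->
     ~ (QBA_class (@lang_eq1 Sigma) `<=` QBA_class (@lang_gt Sigma lam))).
Proof.
split; [|split].
- move=> mu lam hm hl; split; first exact: gt0_sub.
  by apply/seteqP; split; apply: gt_sub.
- move=> mu lam hm hl; split; first exact: eq1_sub.
  by apply/seteqP; split; apply: ge_sub.
- exact: part3.
Qed.
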